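(* Let $\mathfrak h\subset\mathfrak g$ be a Lie subalgebra, $\mathfrak p$ its $h_0$-orthogonal complement, and let $\Psi$ be the $h_0$-orthogonal projection onto $\mathfrak h$, so $\Phi_t=(I-t\Psi)^{-1}$ and $h_t(X,Y)=h_0\big(\tfrac1{1-t}X^{\mathfrak h}+X^{\mathfrak p},Y\big)$. Then for all $X,Y\in\mathfrak g$ and all $t<1$, $$\kappa(t)=\tfrac14|[X,Y]|^2-\tfrac34|[X,Y]^{\mathfrak h}|^2t+\tfrac34|[X^{\mathfrak h},Y^{\mathfrak h}]|^2t^2-\tfrac14|[X^{\mathfrak h},Y^{\mathfrak h}]|^2t^3-\tfrac34|[X^{\mathfrak p},Y^{\mathfrak p}]^{\mathfrak h}|^2\frac{t^2}{1-t}.$$ In particular, if $\mathfrak h$ is abelian, $\kappa(t)=\tfrac14|[X,Y]|^2-\tfrac34|[X,Y]^{\mathfrak h}|^2\,\frac{t}{1-t}$ for $-\infty<t<1$.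
   Context: $G$ is a compact Lie group with Lie algebra $\mathfrak g$ and bi-invariant metric $h_0=\langle\cdot,\cdot\rangle$, $|Z|^2=\langle Z,Z\rangle$. For $Z\in\mathfrak g$, $Z^{\mathfrak h}$ and $Z^{\mathfrak p}$ denote the $h_0$-orthogonal projections onto $\mathfrak h$ and $\mathfrak p=\mathfrak h^\perp$. $h_t$ is the left-invariant metric with $h_t(X,Y)=\langle\Phi_tX,Y\rangle$ on $\mathfrak g$. The unnormalized sectional curvature is $k_h(Z_1,Z_2)=h(R_h(Z_1,Z_2)Z_2,Z_1)$, and for fixed $X,Y$, $\kappa(t)=k_{h_t}(\Phi_t^{-1}X,\Phi_t^{-1}Y)$. *)

(* Defs.v *)
(* The Lie algebra g is modelled as R^n (row vectors 'rV[R]_n)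
   with the standard inner product as the bi-invariant metric h0. *)
From HB Require Import structures.
From mathcomp Require Import all_boot all_order all_algebra.
From mathcomp Require Import reals.
Set Implicit Arguments. Unset Strict Implicit. Unset Printing Implicit Defensive.
Import Order.TTheory GRing.Theory Num.Theory.
Local Open Scope ring_scope.

Section Defs.
Variables (R : realType) (n : nat).
Notation V := 'rV[R]_n.

Definition dot (u v : V) : R := (u *m v^T) 0 0.
Definition sqn (u : V) : R := dot u u.

Definition is_lie_bracket (br : V -> V -> V) : Prop :=
  [/\ (forall (a : R) X X' Y, br (a *: X + X') Y = a *: br X Y + br X' Y),
      (forall (a : R) X Y Y', br X (a *: Y + Y') = a *: br X Y + br X Y'),
      (forall X, br X X = 0) &
      (forall X Y Z, br X (br Y Z) + br Y (br Z X) + br Z (br X Y) = 0)].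

(* h0 is bi-invariant, i.e. ad-invariant: <[X,Y],Z> + <Y,[X,Z]> = 0 *)
Definition ad_invariant (br : V -> V -> V) : Prop :=
  forall X Y Z, dot (br X Y) Z + dot Y (br X Z) = 0.

Definition lie_subalgebra (br : V -> V -> V) (H : 'M[R]_n) : Prop :=
  forall X Y : V, (X <= H)%MS -> (Y <= H)%MS -> (br X Y <= H)%MS.

Definition orth_proj (H P : 'M[R]_n) : Prop :=
  forall X : V, (X *m P <= H)%MS /\
    (forall Z : V, (Z <= H)%MS -> dot (X - X *m P) Z = 0).

Definition abelian_sub (br : V -> V -> V) (H : 'M[R]_n) : Prop :=
  forall X Y : V, (X <= H)%MS -> (Y <= H)%MS -> br X Y = 0.

(* Left-invariant metric h(X,Y) = <X Phi, Y> given by a matrix Phi *)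
Definition lmetric (Phi : 'M[R]_n) (u v : V) : R := dot (u *m Phi) v.

(* Levi-Civita connection of the left-invariant metric on left-invariant fields,
   given by the Koszul formula
   2 h(nabla_X Y, Z) = h([X,Y],Z) - h([Y,Z],X) + h([Z,X],Y). *)
Definition lc_conn (Phi : 'M[R]_n) (br : V -> V -> V) (X Y : V) : V :=
  (\row_j ((lmetric Phi (br X Y) (delta_mx 0 j)
           - lmetric Phi (br Y (delta_mx 0 j)) X
           + lmetric Phi (br (delta_mx 0 j) X) Y) / 2)) *m invmx Phi.

Definition curv (Phi : 'M[R]_n) (br : V -> V -> V) (X Y Z : V) : V :=
  lc_conn Phi br X (lc_conn Phi br Y Z) - lc_conn Phi br Y (lc_conn Phi br X Z)
  - lc_conn Phi br (br X Y) Z.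

(* unnormalized sectional curvature k_h(X,Y) = h(R(X,Y)Y, X) *)
Definition seccurv (Phi : 'M[R]_n) (br : V -> V -> V) (X Y : V) : R :=
  lmetric Phi (curv Phi br X Y Y) X.

Definition Phit (P : 'M[R]_n) (t : R) : 'M[R]_n := invmx (1%:M - t *: P).

End Defs.

(* Main.v *)
Require Import Defs.
From HB Require Import structures.
From mathcomp Require Import all_boot all_order all_algebra.
From mathcomp Require Import reals.
From mathcomp Require Import ring lra.
Import Order.TTheory GRing.Theory Num.Theory.
Local Open Scope ring_scope.

Section Dot.
Set Implicit Arguments. Unset Strict Implicit.
Variables (R : realType) (n : nat).
Notation V := 'rV[R]_n.

Lemma dotE (u v : V) : dot u v = \sum_j u 0 j * v 0 j.
Proof. by rewrite /dot !mxE; apply: eq_bigr => j _; rewrite mxE. Qed.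

Lemma dotC (u v : V) : dot u v = dot v u.
Proof. by rewrite !dotE; apply: eq_bigr => j _; rewrite mulrC. Qed.

Lemma dotDl (u w v : V) : dot (u + w) v = dot u v + dot w v.
Proof. by rewrite !dotE -big_split; apply: eq_bigr => j _; rewrite mxE mulrDl. Qed.

Lemma dotZl (a : R) (u v : V) : dot (a *: u) v = a * dot u v.
Proof. by rewrite !dotE mulr_sumr; apply: eq_bigr => j _; rewrite mxE mulrA. Qed.

Lemma dotNl (u v : V) : dot (- u) v = - dot u v.
Proof. by rewrite -scaleN1r dotZl mulN1r. Qed.

Lemma dotBl (u w v : V) : dot (u - w) v = dot u v - dot w v.
Proof. by rewrite dotDl dotNl. Qed.

Lemma dotDr (u w v : V) : dot v (u + w) = dot v u + dot v w.
Proof. by rewrite dotC dotDl !(dotC v). Qed.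

Lemma dotZr (a : R) (u v : V) : dot v (a *: u) = a * dot v u.
Proof. by rewrite dotC dotZl dotC. Qed.

Lemma dotNr (u v : V) : dot v (- u) = - dot v u.
Proof. by rewrite dotC dotNl dotC. Qed.

Lemma dotBr (u w v : V) : dot v (u - w) = dot v u - dot v w.
Proof. by rewrite dotDr dotNr. Qed.

Lemma dot0l (v : V) : dot 0 v = 0.
Proof. by rewrite -(scale0r 0) dotZl mul0r. Qed.

Lemma dot0r (v : V) : dot v 0 = 0.
Proof. by rewrite dotC dot0l. Qed.

Lemma dot_delta (u : V) j : dot u (delta_mx 0 j) = u 0 j.
Proof. by rewrite /dot trmx_delta -colE mxE. Qed.

Lemma dot_eq0 (u : V) : dot u u = 0 -> u = 0.
Proof.
rewrite dotE => h; apply/rowP => j; rewrite mxE.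
have := @psumr_eq0P _ _ predT (fun j => u 0 j * u 0 j).
move=> /(_ (fun i _ => (ltac:(rewrite -expr2; exact: sqr_ge0))) h j isT) /eqP.
by rewrite mulf_eq0 orbb => /eqP.
Qed.

Lemma dot_ext (u v : V) : (forall w, dot u w = dot v w) -> u = v.
Proof. by move=> h; apply/rowP => j; rewrite -!dot_delta. Qed.

End Dot.
Unset Implicit Arguments.
Section Abs.
Variables (R : realType) (V : lmodType R).
Variables (br : V -> V -> V) (dt : V -> V -> R) (pr : V -> V).
Hypothesis brDl : forall X X' Y, br (X + X') Y = br X Y + br X' Y.
Hypothesis brDr : forall X Y Y', br X (Y + Y') = br X Y + br X Y'.
Hypothesis brZl : forall a X Y, br (a *: X) Y = a *: br X Y.
Hypothesis brZr : forall a X Y, br X (a *: Y) = a *: br X Y.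
Hypothesis brxx : forall X, br X X = 0.
Hypothesis dtDl : forall u w v, dt (u + w) v = dt u v + dt w v.
Hypothesis dtZl : forall a u v, dt (a *: u) v = a * dt u v.
Hypothesis dtC : forall u v, dt u v = dt v u.
Hypothesis prD : forall u w, pr (u + w) = pr u + pr w.
Hypothesis prZ : forall a u, pr (a *: u) = a *: pr u.
Hypothesis Psym : forall u w, dt (pr u) w = dt u (pr w).
Hypothesis PP : forall u, pr (pr u) = pr u.
Hypothesis dext : forall a b, (forall w, dt a w = dt b w) -> a = b.

Lemma br0la Y : br 0 Y = 0.
Proof. by rewrite -{1}(scale0r (0 : V)) brZl scale0r. Qed.
Lemma br0ra X : br X 0 = 0.
Proof. by rewrite -{1}(scale0r (0 : V)) brZr scale0r. Qed.
Lemma brNla X Y : br (- X) Y = - br X Y.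
Proof. by rewrite -scaleN1r brZl scaleN1r. Qed.
Lemma brNra X Y : br X (- Y) = - br X Y.
Proof. by rewrite -scaleN1r brZr scaleN1r. Qed.
Lemma brBla X X' Y : br (X - X') Y = br X Y - br X' Y.
Proof. by rewrite brDl brNla. Qed.
Lemma brBra X Y Y' : br X (Y - Y') = br X Y - br X Y'.
Proof. by rewrite brDr brNra. Qed.
Lemma brCa X Y : br X Y = - br Y X.
Proof.
have := brxx (X + Y); rewrite brDl !brDr !brxx add0r addr0.
by move/eqP; rewrite addr_eq0 => /eqP.
Qed.
Lemma dtNl u v : dt (- u) v = - dt u v.
Proof. by rewrite -scaleN1r dtZl mulN1r. Qed.
Lemma dtBl u w v : dt (u - w) v = dt u v - dt w v.
Proof. by rewrite dtDl dtNl. Qed.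
Lemma dtDr u w v : dt v (u + w) = dt v u + dt v w.
Proof. by rewrite dtC dtDl !(dtC v). Qed.
Lemma dtZr a u v : dt v (a *: u) = a * dt v u.
Proof. by rewrite dtC dtZl dtC. Qed.
Lemma dtNr u v : dt v (- u) = - dt v u.
Proof. by rewrite dtC dtNl dtC. Qed.
Lemma dtBr u w v : dt v (u - w) = dt v u - dt v w.
Proof. by rewrite dtDr dtNr. Qed.
Lemma dt0l v : dt 0 v = 0.
Proof. by rewrite -(scale0r (0 : V)) dtZl mul0r. Qed.
Lemma dt0r v : dt v 0 = 0.
Proof. by rewrite dtC dt0l. Qed.
Lemma prN u : pr (- u) = - pr u.
Proof. by rewrite -scaleN1r prZ scaleN1r. Qed.
Lemma prB u w : pr (u - w) = pr u - pr w.
Proof. by rewrite prD prN. Qed.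
Lemma pr0 : pr 0 = 0.
Proof. by rewrite -{1}(scale0r (0 : V)) prZ scale0r. Qed.

Definition hm (s : R) z w := dt z (w + s *: pr w).
Definition nba (s : R) A B := (1/2) *: br A B + (s / 2) *: (br B (pr A) + br A (pr B)).

Lemma alg t (x u y v : V) : t < 1 -> pr x = x -> pr u = 0 -> pr y = y -> pr v = 0 ->
  pr (br x y) = br x y -> pr (br x v) = 0 -> pr (br u y) = 0 -> pr (br u x) = 0 ->
  pr (br v y) = 0 ->
  dt (br u y) (br x v) + dt (br u x) (br v y) + dt (br u v) (br y x) = 0 ->
  let s := t / (1 - t) in
  let X := x + u in let Y := y + v in
  let A := X - t *: pr X in let B := Y - t *: pr Y in
  - hm s (nba s B B) (nba s A A) + hm s (nba s A B) (nba s B A)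
  - (dt (br A B) (br B X) + hm s (br A B) (br A B) - dt (br A B) (br A Y)) / 2
  = 1/4 * dt (br X Y) (br X Y) - 3/4 * dt (pr (br X Y)) (pr (br X Y)) * t
          + 3/4 * dt (br x y) (br x y) * t ^+ 2 - 1/4 * dt (br x y) (br x y) * t ^+ 3
          - 3/4 * dt (pr (br u v)) (pr (br u v)) * (t ^+ 2 / (1 - t)).
Proof.
move=> ht hx hu hy hv pxy pxv puy pux pvy jac s X Y A B.
have _ := (brDl, brDr, brZl, brZr, brxx, dtDl, dtZl, dtC, prD, prZ, Psym, PP, dext).
have hne : 1 - t != 0 by rewrite subr_eq0 gt_eqF.
have o1 : dt (br x y) (br x v) = 0 by rewrite -pxy Psym pxv dt0r.
have o2 : dt (br x y) (br u y) = 0 by rewrite -pxy Psym puy dt0r.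
have o3 : dt (br x y) (br u x) = 0 by rewrite -pxy Psym pux dt0r.
have o4 : dt (br x y) (br v y) = 0 by rewrite -pxy Psym pvy dt0r.
rewrite (brCa y x) dtNr in jac.
rewrite ?(dtC (br x v) (br x y)) ?(dtC (br u y) (br x y)) ?(dtC (br u v) (br x y)) ?(dtC (br u x) (br x y)) ?(dtC (br v y) (br x y)) ?(dtC (br u y) (br x v)) ?(dtC (br u v) (br x v)) ?(dtC (br u x) (br x v)) ?(dtC (br v y) (br x v)) ?(dtC (br u v) (br u y)) ?(dtC (br u x) (br u y)) ?(dtC (br v y) (br u y)) ?(dtC (br u x) (br u v)) ?(dtC (br v y) (br u v)) ?(dtC (br v y) (br u x)) in jac.
have hX : pr X = x by rewrite /X prD hx hu addr0.
have hY : pr Y = y by rewrite /Y prD hy hv addr0.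
set a := 1 - t.
have eA : A = u + a *: x by rewrite /A hX /X /a scalerBl scale1r addrAC addrC addrA.
have eB : B = v + a *: y by rewrite /B hY /Y /a scalerBl scale1r addrAC addrC addrA.
have sa : s * a = t by rewrite /s /a; field.
have prA : pr A = a *: x by rewrite eA prD prZ hu hx add0r.
have prB : pr B = a *: y by rewrite eB prD prZ hv hy add0r.
have nAA : nba s A A = t *: br u x.
  rewrite /nba brxx scaler0 add0r prA eA !brZr brDl brZl brxx scaler0 addr0.
  by rewrite -scalerDl scalerA; congr (_ *: _); rewrite /s /a; field.
have nBB : nba s B B = t *: br v y.
  rewrite /nba brxx scaler0 add0r prB eB !brZr brDl brZl brxx scaler0 addr0.
  by rewrite -scalerDl scalerA; congr (_ *: _); rewrite /s /a; field.
have nAB : nba s A B = (1/2) *: br A B + (t/2) *: (br u y - br x v).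
  rewrite /nba prA prB eA eB; rewrite ?(brDl, brDr, brBla, brBra, brNla, brNra, brZl, brZr, brxx,
   addr0, add0r, subr0, sub0r, oppr0, scaler0, opprK,
   (brCa y x), (brCa v x), (brCa y u), (brCa v u), (brCa x u), (brCa y v)); apply: dext => w; rewrite ?(dtDl, dtDr, dtBl, dtBr, dtNl, dtNr, dtZl, dtZr).
  by rewrite /s /a; field.
have nBA : nba s B A = (-1/2) *: br A B + (t/2) *: (br u y - br x v).
  rewrite /nba prA prB eA eB; rewrite ?(brDl, brDr, brBla, brBra, brNla, brNra, brZl, brZr, brxx,
   addr0, add0r, subr0, sub0r, oppr0, scaler0, opprK,
   (brCa y x), (brCa v x), (brCa y u), (brCa v u), (brCa x u), (brCa y v)); apply: dext => w; rewrite ?(dtDl, dtDr, dtBl, dtBr, dtNl, dtNr, dtZl, dtZr).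
  by rewrite /s /a; field.
have eG : br A B = br u v + a *: (br x v + br u y) + (a ^+ 2) *: br x y.
  rewrite eA eB; rewrite ?(brDl, brDr, brBla, brBra, brNla, brNra, brZl, brZr, brxx,
   addr0, add0r, subr0, sub0r, oppr0, scaler0, opprK,
   (brCa y x), (brCa v x), (brCa y u), (brCa v u), (brCa x u), (brCa y v)); apply: dext => w; rewrite ?(dtDl, dtDr, dtBl, dtBr, dtNl, dtNr, dtZl, dtZr); ring.
have eBX : br B X = - br x v - br u v - a *: br x y - a *: br u y.
  rewrite eB /X; rewrite ?(brDl, brDr, brBla, brBra, brNla, brNra, brZl, brZr, brxx,
   addr0, add0r, subr0, sub0r, oppr0, scaler0, opprK,
   (brCa y x), (brCa v x), (brCa y u), (brCa v u), (brCa x u), (brCa y v)); apply: dext => w; rewrite ?(dtDl, dtDr, dtBl, dtBr, dtNl, dtNr, dtZl, dtZr); ring.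
have eAY : br A Y = br u y + br u v + a *: br x y + a *: br x v.
  rewrite eA /Y; rewrite ?(brDl, brDr, brBla, brBra, brNla, brNra, brZl, brZr, brxx,
   addr0, add0r, subr0, sub0r, oppr0, scaler0, opprK,
   (brCa y x), (brCa v x), (brCa y u), (brCa v u), (brCa x u), (brCa y v)); apply: dext => w; rewrite ?(dtDl, dtDr, dtBl, dtBr, dtNl, dtNr, dtZl, dtZr); ring.
have eXY : br X Y = br x y + br x v + br u y + br u v.
  rewrite /X /Y; rewrite ?(brDl, brDr, brBla, brBra, brNla, brNra, brZl, brZr, brxx,
   addr0, add0r, subr0, sub0r, oppr0, scaler0, opprK,
   (brCa y x), (brCa v x), (brCa y u), (brCa v u), (brCa x u), (brCa y v)); apply: dext => w; rewrite ?(dtDl, dtDr, dtBl, dtBr, dtNl, dtNr, dtZl, dtZr); ring.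
rewrite nAA nBB nAB nBA eBX eAY /hm eXY eG.
rewrite ?(prD, prB, prN, prZ, pr0, pxy, pxv, puy, pux, pvy, addr0, add0r, subr0, sub0r, oppr0, scaler0).
rewrite ?(dtDl, dtDr, dtBl, dtBr, dtNl, dtNr, dtZl, dtZr).
rewrite ?Psym ?PP.
rewrite ?(dtC (br x y) (pr (br u v))) ?(dtC (br x v) (pr (br u v))) ?(dtC (br u y) (pr (br u v)))
  ?(dtC (br u x) (pr (br u v))) ?(dtC (br v y) (pr (br u v))).
rewrite ?Psym ?PP ?(pxy, pxv, puy, pux, pvy, dt0r, dt0l).
rewrite ?(dtC (br x v) (br x y)) ?(dtC (br u y) (br x y)) ?(dtC (br u v) (br x y)) ?(dtC (br u x) (br x y)) ?(dtC (br v y) (br x y)) ?(dtC (br u y) (br x v)) ?(dtC (br u v) (br x v)) ?(dtC (br u x) (br x v)) ?(dtC (br v y) (br x v)) ?(dtC (br u v) (br u y)) ?(dtC (br u x) (br u y)) ?(dtC (br v y) (br u y)) ?(dtC (br u x) (br u v)) ?(dtC (br v y) (br u v)) ?(dtC (br v y) (br u x)).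
rewrite ?(o1, o2, o3, o4).
have jac' : dt (br u x) (br v y) = dt (br x y) (br u v) - dt (br x v) (br u y) by move: jac; lra.
rewrite jac' /s /a.
field. all: try exact: hne.
Qed.

End Abs.
Section Main.
Variables (R : realType) (n : nat).
Notation V := 'rV[R]_n.
Variable br : V -> V -> V.
Variables (H P : 'M[R]_n).
Hypothesis hbr : is_lie_bracket br.
Hypothesis had : ad_invariant br.
Hypothesis hsub : lie_subalgebra br H.
Hypothesis hP : orth_proj H P.

Lemma br0l Y : br 0 Y = 0.
Proof.
case: hbr => h _ _ _; have := h 1 0 0 Y.
rewrite !scale1r addr0 => /(congr1 (fun z => z - br 0 Y)).
by rewrite addrK subrr => /esym.
Qed.
Lemma br0r X : br X 0 = 0.
Proof.
case: hbr => _ h _ _; have := h 1 X 0 0.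
rewrite !scale1r addr0 => /(congr1 (fun z => z - br X 0)).
by rewrite addrK subrr => /esym.
Qed.
Lemma brDl X X' Y : br (X + X') Y = br X Y + br X' Y.
Proof. by case: hbr => h _ _ _; rewrite -{1}(scale1r X) h scale1r. Qed.
Lemma brDr X Y Y' : br X (Y + Y') = br X Y + br X Y'.
Proof. by case: hbr => _ h _ _; rewrite -{1}(scale1r Y) h scale1r. Qed.
Lemma brZl a X Y : br (a *: X) Y = a *: br X Y.
Proof. by case: hbr => h _ _ _; rewrite -(addr0 (a *: X)) h br0l addr0. Qed.
Lemma brZr a X Y : br X (a *: Y) = a *: br X Y.
Proof. by case: hbr => _ h _ _; rewrite -(addr0 (a *: Y)) h br0r addr0. Qed.
Lemma brNl X Y : br (- X) Y = - br X Y.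
Proof. by rewrite -scaleN1r brZl scaleN1r. Qed.
Lemma brNr X Y : br X (- Y) = - br X Y.
Proof. by rewrite -scaleN1r brZr scaleN1r. Qed.
Lemma brBl X X' Y : br (X - X') Y = br X Y - br X' Y.
Proof. by rewrite brDl brNl. Qed.
Lemma brBr X Y Y' : br X (Y - Y') = br X Y - br X Y'.
Proof. by rewrite brDr brNr. Qed.
Lemma brxx X : br X X = 0.
Proof. by case: hbr. Qed.
Lemma brC X Y : br X Y = - br Y X.
Proof.
have := brxx (X + Y); rewrite brDl !brDr !brxx add0r addr0.
by move/eqP; rewrite addr_eq0 => /eqP.
Qed.

Lemma adl X Y Z : dot (br X Y) Z = - dot Y (br X Z).
Proof. by apply/eqP; rewrite -addr_eq0; apply/eqP; apply: had. Qed.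

Lemma dot_jacobi a b c d :
  dot (br a b) (br c d) + dot (br a c) (br d b) + dot (br a d) (br b c) = 0.
Proof.
have e z w : dot (br a z) w = dot a (br z w).
  by rewrite brC dotNl adl opprK.
rewrite !e -!dotDr; case: hbr => _ _ _ ->; exact: dot0r.
Qed.

Lemma PH (u : V) : (u *m P <= H)%MS.
Proof. by case: (hP u). Qed.
Lemma Porth (u Z : V) : (Z <= H)%MS -> dot (u - u *m P) Z = 0.
Proof. by case: (hP u) => _; apply. Qed.

Lemma Psym (u w : V) : dot (u *m P) w = dot u (w *m P).
Proof.
have h1 := Porth w _ (PH u); have h2 := Porth u _ (PH w).
move: h1 h2; rewrite !dotBl => /eqP; rewrite subr_eq0 => /eqP h1.
move/eqP; rewrite subr_eq0 => /eqP h2.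
by rewrite dotC h1 dotC -h2.
Qed.

Lemma PidH (Z : V) : (Z <= H)%MS -> Z *m P = Z.
Proof.
move=> hZ.
have hd : (Z - Z *m P <= H)%MS.
  by apply: addmx_sub => //; rewrite -scaleN1r; apply: scalemx_sub; apply: PH.
by have := Porth Z _ hd => /dot_eq0 /eqP; rewrite subr_eq0 => /eqP /esym.
Qed.

Lemma PP (u : V) : u *m P *m P = u *m P.
Proof. exact: PidH (PH u). Qed.

Lemma PPm : P *m P = P.
Proof. by apply/row_matrixP => i; rewrite !rowE mulmxA PP. Qed.

Lemma dot_hp (a b : V) : b *m P = 0 -> dot (a *m P) b = 0.
Proof. by move=> h; rewrite Psym h dot0r. Qed.

Lemma brHH (u w : V) : br (u *m P) (w *m P) *m P = br (u *m P) (w *m P).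
Proof. by apply: PidH; apply: hsub; apply: PH. Qed.

Lemma brHp (u w : V) : br (u *m P) (w - w *m P) *m P = 0.
Proof.
apply: dot_ext => W; rewrite dot0l Psym adl.
rewrite -(PidH _ (hsub _ _ (PH u) (PH W))) -Psym mulmxBl PP subrr dot0l.
by rewrite oppr0.
Qed.

Lemma brpH (u w : V) : br (w - w *m P) (u *m P) *m P = 0.
Proof. by rewrite brC mulNmx brHp oppr0. Qed.


Definition sc (t : R) := t / (1 - t).

Lemma Phit_eq t : t < 1 -> Phit P t = 1%:M + sc t *: P.
Proof.
move=> ht; have hne : 1 - t != 0 by rewrite subr_eq0 gt_eqF.
have hm : (1%:M - t *: P) *m (1%:M + sc t *: P) = 1%:M.
  rewrite mulmxDr mulmx1 !mulmxBl mul1mx -!scalemxAl -scalemxAr PPm scalerA.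
  apply/matrixP => i j; rewrite !mxE /sc; field; exact: hne.
have [hu _] := mulmx1_unit hm.
by rewrite /Phit -[RHS](mulKmx hu) hm mulmx1.
Qed.

Lemma Phit_unit t : t < 1 -> Phit P t \in unitmx.
Proof.
move=> ht; rewrite /Phit unitmx_inv.
have hne : 1 - t != 0 by rewrite subr_eq0 gt_eqF.
have hm : (1%:M - t *: P) *m (1%:M + sc t *: P) = 1%:M.
  rewrite mulmxDr mulmx1 !mulmxBl mul1mx -!scalemxAl -scalemxAr PPm scalerA.
  apply/matrixP => i j; rewrite !mxE /sc; field; exact: hne.
by have [hu _] := mulmx1_unit hm.
Qed.

Lemma mulPhi t (u : V) : t < 1 -> u *m Phit P t = u + sc t *: (u *m P).
Proof. by move=> ht; rewrite Phit_eq // mulmxDr mulmx1 scalemxAr. Qed.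

Lemma mulPhiV t (u : V) : t < 1 -> u *m invmx (Phit P t) = u - t *: (u *m P).
Proof. by move=> ht; rewrite /Phit invmxK mulmxBr mulmx1 scalemxAr. Qed.

Lemma lmetricE t (u w : V) : t < 1 ->
  lmetric (Phit P t) u w = dot u (w + sc t *: (w *m P)).
Proof. by move=> ht; rewrite /lmetric mulPhi // dotDl dotZl Psym dotDr dotZr. Qed.

Lemma lmetricV t (u w : V) : t < 1 ->
  lmetric (Phit P t) u (w *m invmx (Phit P t)) = dot u w.
Proof.
move=> ht; have hne : 1 - t != 0 by rewrite subr_eq0 gt_eqF.
rewrite lmetricE // mulPhiV // mulmxBl -scalemxAl PP.
rewrite !(dotDr, dotBr, dotNr, dotZr) /sc; field; exact: hne.
Qed.

Definition nab t (A B : V) :=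
  (1/2) *: br A B + (sc t / 2) *: (br B (A *m P) + br A (B *m P)).

Lemma DP (A B : V) : (br B (A *m P) + br A (B *m P)) *m P = 0.
Proof.
have e1 : br B (A *m P) = br (B - B *m P) (A *m P) + br (B *m P) (A *m P).
  by rewrite -brDl subrK.
have e2 : br A (B *m P) = br (A - A *m P) (B *m P) + br (A *m P) (B *m P).
  by rewrite -brDl subrK.
rewrite e1 e2 !mulmxDl !brpH !brHH !add0r.
by rewrite (brC (B *m P)) addNr.
Qed.

Lemma koszul t (A B W : V) : t < 1 ->
  lmetric (Phit P t) (nab t A B) W =
  (lmetric (Phit P t) (br A B) W - lmetric (Phit P t) (br B W) A
   + lmetric (Phit P t) (br W A) B) / 2.
Proof.
move=> ht; rewrite /lmetric !mulPhi // /nab.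
rewrite mulmxDl -!scalemxAl DP scaler0 addr0.
rewrite !dotDl !dotZl (Psym (br B W)) (Psym (br W A)).
rewrite (adl B W A) (adl B W (A *m P)) (brC W A) !dotNl.
rewrite (adl A W B) (adl A W (B *m P)).
rewrite !(dotC W) (brC B A) !dotNl !dotDl.
by field.
Qed.

Lemma lc_connE t (A B : V) : t < 1 -> lc_conn (Phit P t) br A B = nab t A B.
Proof.
move=> ht; rewrite /lc_conn.
suff -> : \row_j ((lmetric (Phit P t) (br A B) (delta_mx 0 j)
           - lmetric (Phit P t) (br B (delta_mx 0 j)) A
           + lmetric (Phit P t) (br (delta_mx 0 j) A) B) / 2)
   = nab t A B *m Phit P t by rewrite mulmxK // Phit_unit.
by apply/rowP => j; rewrite mxE -koszul // /lmetric dot_delta.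
Qed.


Lemma lmetricN t (u w : V) : lmetric (Phit P t) (- u) w = - lmetric (Phit P t) u w.
Proof. by rewrite /lmetric mulNmx dotNl. Qed.
Lemma lmetricBl t (u u' w : V) :
  lmetric (Phit P t) (u - u') w = lmetric (Phit P t) u w - lmetric (Phit P t) u' w.
Proof. by rewrite /lmetric mulmxBl dotBl. Qed.
Lemma lmetricC t (u w : V) : t < 1 ->
  lmetric (Phit P t) u w = lmetric (Phit P t) w u.
Proof. by move=> ht; rewrite !lmetricE // !dotDr !dotZr -Psym (dotC w u) (dotC w (u *m P)). Qed.

Lemma compat t (A Z W : V) : t < 1 ->
  lmetric (Phit P t) (nab t A Z) W = - lmetric (Phit P t) Z (nab t A W).
Proof.
move=> ht; rewrite (lmetricC _ Z) // !koszul //.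
rewrite (brC Z A) (brC W Z) (brC A W) !lmetricN.
rewrite (lmetricC _ (br A Z) W) //.
by field.
Qed.

Lemma kstruct t (X Y A B : V) : t < 1 ->
  A = X *m invmx (Phit P t) -> B = Y *m invmx (Phit P t) ->
  seccurv (Phit P t) br A B =
  - lmetric (Phit P t) (nab t B B) (nab t A A) + lmetric (Phit P t) (nab t A B) (nab t B A)
  - (dot (br A B) (br B X) + lmetric (Phit P t) (br A B) (br A B) - dot (br A B) (br A Y)) / 2.
Proof.
move=> ht eA eB.
rewrite /seccurv /curv !lc_connE // !lmetricBl.
rewrite (compat _ A (nab t B B) A) // (compat _ B (nab t A B) A) // (koszul _ (br A B) B A) //.
have lvX z : lmetric (Phit P t) z A = dot z X by rewrite eA lmetricV.
have lvY z : lmetric (Phit P t) z B = dot z Y by rewrite eB lmetricV.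
rewrite (lvX (br (br A B) B)) (lvY (br A (br A B))).
rewrite (brC B A) lmetricN (lmetricC _ (nab t B B)) //.
rewrite (brC (br A B) B) dotNl adl (adl A (br A B) Y).
by field.
Qed.

Lemma kappa_eq (X Y : V) t : t < 1 ->
  seccurv (Phit P t) br (X *m invmx (Phit P t)) (Y *m invmx (Phit P t)) =
  1/4 * sqn (br X Y) - 3/4 * sqn (br X Y *m P) * t
          + 3/4 * sqn (br (X *m P) (Y *m P)) * t ^+ 2 - 1/4 * sqn (br (X *m P) (Y *m P)) * t ^+ 3
          - 3/4 * sqn (br (X - X *m P) (Y - Y *m P) *m P) * (t ^+ 2 / (1 - t)).
Proof.
move=> ht.
rewrite (@kstruct t X Y (X *m invmx (Phit P t)) (Y *m invmx (Phit P t))) //.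
rewrite !mulPhiV // !lmetricE //.
have prZ a (w : V) : (a *: w) *m P = a *: (w *m P) by rewrite scalemxAl.
have hu (Z : V) : (Z - Z *m P) *m P = 0 by rewrite mulmxBl PP subrr.
have h := @alg R [the lmodType R of V] br (@dot R n) (fun w => w *m P)
  brDl brDr brZl brZr brxx (@dotDl R n) (@dotZl R n) (@dotC R n) (fun u w => mulmxDl u w P)
  prZ Psym PP (@dot_ext R n) t (X *m P) (X - X *m P) (Y *m P) (Y - Y *m P) ht
  (PP X) (hu X) (PP Y) (hu Y) (brHH X Y) (brHp X Y) (brpH Y X) (brpH X X) (brpH Y Y)
  (dot_jacobi (X - X *m P) (Y *m P) (X *m P) (Y - Y *m P)).
have eX : X *m P + (X - X *m P) = X by rewrite addrC subrK.
have eY : Y *m P + (Y - Y *m P) = Y by rewrite addrC subrK.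
cbv zeta in h; rewrite eX eY in h.
exact: h.
Qed.

Lemma projXY (X Y : V) : abelian_sub br H ->
  br X Y *m P = br (X - X *m P) (Y - Y *m P) *m P /\ br (X *m P) (Y *m P) = 0.
Proof.
move=> hab; have _ := (hbr, had, hsub, hP).
have e0 : br (X *m P) (Y *m P) = 0 by apply: hab; apply: PH.
split=> //.
have eX : X *m P + (X - X *m P) = X by rewrite addrC subrK.
have eY : Y *m P + (Y - Y *m P) = Y by rewrite addrC subrK.
have -> : br X Y = br (X *m P + (X - X *m P)) (Y *m P + (Y - Y *m P)) by rewrite eX eY.
rewrite (brDl (X *m P) (X - X *m P)) (brDr (X *m P) (Y *m P)) (brDr (X - X *m P) (Y *m P)) !mulmxDl.
rewrite e0 mul0mx add0r brHp add0r brpH add0r.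
by [].
Qed.

End Main.

Theorem mainTheorem7 (R : realType) (n : nat) (br : 'rV[R]_n -> 'rV[R]_n -> 'rV[R]_n)
  (H P : 'M[R]_n) :
  is_lie_bracket br -> ad_invariant br -> lie_subalgebra br H -> orth_proj H P ->
  forall (X Y : 'rV[R]_n) (t : R), t < 1 ->
  let kappa := seccurv (Phit P t) br (X *m invmx (Phit P t)) (Y *m invmx (Phit P t)) in
  let Xh := X *m P in let Yh := Y *m P in
  let Xp := X - X *m P in let Yp := Y - Y *m P in
  kappa = 1/4 * sqn (br X Y) - 3/4 * sqn (br X Y *m P) * t
          + 3/4 * sqn (br Xh Yh) * t ^+ 2 - 1/4 * sqn (br Xh Yh) * t ^+ 3
          - 3/4 * sqn (br Xp Yp *m P) * (t ^+ 2 / (1 - t))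
  /\ (abelian_sub br H ->
      kappa = 1/4 * sqn (br X Y) - 3/4 * sqn (br X Y *m P) * (t / (1 - t))).
Proof.
move=> hbr had hsub hP X Y t ht kappa Xh Yh Xp Yp.
have k1 := @kappa_eq R n br H P hbr had hsub hP X Y t ht.
split; first exact: k1.
move=> hab; rewrite /kappa k1.
have [eP e0] := @projXY R n br H P hbr had hsub hP X Y hab.
rewrite -/Xh -/Yh -/Xp -/Yp in eP e0.
rewrite e0 eP /sqn dot0l.
have hne : 1 - t != 0 by rewrite subr_eq0 gt_eqF.
by field.
Qed.
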